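(* Under the standing assumptions in the context, let $k\ge2$ be a fixed integer and let $v_1,\dots,v_k$ be distinct vertices of $S_{\mathrm{small}}$. Then $$\Pr\bigl(v_1v_2\in E(G)\ \big|\ d_S(v_1)=i_1,\dots,d_S(v_k)=i_k\bigr)=O\!\left(\frac{J^2M}{d(S)^2}\right)$$ for all integers $i_j\le d(v_j)$ ($j\le k$) for which the conditioning event has positive probability, and $\Pr(v_1v_2\in E(G))=O\!\left(\frac{J^2M}{d(S)^2}\right)$.
   Context: All asymptotics are as $n\to\infty$. For each $n$, $\mathbf d=(d(1),\dots,d(n))$ is a sequence of integers with $1\le d(1)\le\dots\le d(n)$ and even sum; $M=\sum_i d(i)$, $\Delta=d(n)$, $d(A)=\sum_{i\in A}d(i)$. $G$ is a uniformly random simple graph on $[n]$ with degree sequence $\mathbf d$. $S\subseteq[n]$ is a given set, $\gamma=d(S)/M$, $d_S(v)$ is the degree of $v$ in $G[S]$. Standing assumptions: there is $\delta=\delta(n)\to0$ with $\delta^{-1}=O(\log\log M)$ and $\Delta^2(\gamma^{-1}\log M)^{12}\le\delta\,d(S)$, and a constant $c>0$ with $\gamma<1-c$. Define $C=\delta^{-1/16}\gamma^{-1}\log M$, $J=\min\{C,\Delta\}$ and $S_{\mathrm{small}}=\{v\in S: d(v)\le C\}$. *)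

(* Defs.v *)
From Stdlib Require Import Reals.
From mathcomp Require Import all_boot.
Set Implicit Arguments.
Unset Strict Implicit.
Unset Printing Implicit Defensive.

Open Scope R_scope.

Definition graph (n : nat) := {ffun 'I_n * 'I_n -> bool}.

Definition simpleb n (G : graph n) : bool :=
  [forall u, ~~ G (u, u)] && [forall u, forall v, G (u, v) == G (v, u)].

Definition deg n (G : graph n) (v : 'I_n) : nat := #|[set u | G (v, u)]|.

(* d_S(v): degree of v in G[S] (for v in S) *)
Definition degS n (S : {set 'I_n}) (G : graph n) (v : 'I_n) : nat :=
  #|[set u in S | G (v, u)]|.

Definition graphs n (d : 'I_n -> nat) : {set graph n} :=
  [set G | simpleb G && [forall v, deg G v == d v]].

Definition prob n (d : 'I_n -> nat) (A : {set graph n}) : R :=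
  INR #|A :&: graphs d| / INR #|graphs d|.

Definition cprob n (d : 'I_n -> nat) (A B : {set graph n}) : R :=
  INR #|A :&: B :&: graphs d| / INR #|B :&: graphs d|.

Definition edge_ev n (u v : 'I_n) : {set graph n} := [set G : graph n | G (u, v)].

Definition Mtot n (d : 'I_n -> nat) : nat := (\sum_(i : 'I_n) d i)%N.
Definition dset n (d : 'I_n -> nat) (A : {set 'I_n}) : nat := (\sum_(i in A) d i)%N.
(* Delta = d(n) = max degree (equal under sortedness) *)
Definition Delta n (d : 'I_n -> nat) : nat := (\max_(i : 'I_n) d i)%N.

Definition gam n (d : 'I_n -> nat) (S : {set 'I_n}) : R :=
  INR (dset d S) / INR (Mtot d).

Definition Cpar n (d : 'I_n -> nat) (S : {set 'I_n}) (delta : R) : R :=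
  Rpower delta (- (1/16)) * / gam d S * ln (INR (Mtot d)).

Definition Jpar n (d : 'I_n -> nat) (S : {set 'I_n}) (delta : R) : R :=
  Rmin (Cpar d S delta) (INR (Delta d)).

Definition Ssmall n (d : 'I_n -> nat) (S : {set 'I_n}) (delta : R) : {set 'I_n} :=
  [set v in S | if Rle_dec (INR (d v)) (Cpar d S delta) then true else false].

Definition standing (d : forall n, 'I_n -> nat) (S : forall n, {set 'I_n})
  (delta : nat -> R) (c : R) : Prop :=
  0 < c /\
  (forall n, 0 < delta n) /\
  (forall eps, 0 < eps -> exists N, forall n, (N <= n)%N -> delta n < eps) /\
  (exists K0 N0, forall n, (N0 <= n)%N ->
       / delta n <= K0 * ln (ln (INR (Mtot (d n))))) /\
  (exists N1, forall n, (N1 <= n)%N ->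
     (forall i j : 'I_n, (i <= j)%N -> (d n i <= d n j)%N) /\
     (forall i : 'I_n, (1 <= d n i)%N) /\
     ~~ odd (Mtot (d n)) /\
     graphs (d n) != set0 /\
     (INR (Delta (d n)))^2 * (/ gam (d n) (S n) * ln (INR (Mtot (d n))))^12
        <= delta n * INR (dset (d n) (S n)) /\
     gam (d n) (S n) < 1 - c).

(* Main.v *)
Require Import Defs.
From Stdlib Require Import Reals Lra.
From mathcomp Require Import all_boot.
Set Implicit Arguments.
Unset Strict Implicit.
Unset Printing Implicit Defensive.

Section Gen.
Local Open Scope nat_scope.

Lemma leq_cardU (T : finType) (A B : {set T}) : #|A :|: B| <= #|A| + #|B|.
Proof. by rewrite cardsU leq_subr. Qed.

Lemma leq_cardD (T : finType) (A B : {set T}) : #|A| - #|B| <= #|A :\: B|.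
Proof. by rewrite cardsD leq_sub2l // subset_leq_card // subsetIr. Qed.

Lemma card_dep (T1 T2 : finType) (P : pred T1) (Q : T1 -> pred T2) :
  #|[set p : T1 * T2 | P p.1 && Q p.1 p.2]| = \sum_(i | P i) #|[set j | Q i j]|.
Proof.
rewrite -sum1_card (eq_bigl (fun p => P p.1 && Q p.1 p.2)); last by move=> p; rewrite inE.
rewrite -(pair_big_dep P Q (fun _ _ => 1)); apply: eq_bigr => i _.
by rewrite -sum1_card; apply: eq_bigl => j; rewrite inE.
Qed.

Definition pswap (T1 T2 : Type) (p : T1 * T2) := (p.2, p.1).

Lemma card_dep2 (T1 T2 : finType) (Q : T1 -> pred T2) :
  #|[set p : T1 * T2 | Q p.1 p.2]| = \sum_j #|[set i | Q i j]|.
Proof.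
have -> : #|[set p : T1 * T2 | Q p.1 p.2]| = #|[set p : T2 * T1 | predT p.1 && Q p.2 p.1]|.
  rewrite -(card_imset _ (can_inj (g := @pswap T2 T1) (f := @pswap T1 T2) _)); last by case.
  apply: eq_card => -[j i]; rewrite inE; apply/imsetP/idP => [[[i' j'] ]|].
    by rewrite inE => h [-> ->].
  by move=> h; exists (i, j); rewrite ?inE.
by rewrite (card_dep predT (fun j i => Q i j)); apply: eq_bigl.
Qed.

Definition tsw (T : eqType) (z1 z2 z : T) := if z == z1 then z2 else if z == z2 then z1 else z.

Lemma tswK (T : eqType) (z1 z2 : T) : involutive (tsw z1 z2).
Proof.
move=> z; rewrite /tsw.
case: (eqVneq z z1) => [->|h1]; first by rewrite eqxx; case: (eqVneq z2 z1).
case: (eqVneq z z2) => [->|h2]; first by rewrite eqxx.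
by rewrite (negbTE h1) (negbTE h2).
Qed.

Lemma tsw_pred (T : eqType) (P : pred T) z1 z2 z : P z1 = P z2 -> P (tsw z1 z2 z) = P z.
Proof.
move=> h; rewrite /tsw.
case: (eqVneq z z1) => [->|h1] //; case: (eqVneq z z2) => [->|h2] //.
Qed.

End Gen.

Ltac neqs := repeat match goal with
 | H : is_true (?p != ?q) |- context [?p == ?q] => rewrite (negbTE H)
 | H : is_true (?p != ?q) |- context [?q == ?p] => rewrite (eq_sym q p) (negbTE H)
 end.

Section Switch.
Local Open Scope nat_scope.
Variable n : nat.
Implicit Types G : graph n.

Definition ep (p q r s : 'I_n) := ((p == r) && (q == s)) || ((p == s) && (q == r)).

Lemma ep_sym p q r s : ep q p r s = ep p q r s.
Proof. by rewrite /ep orbC; congr orb; apply: andbC. Qed.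

Lemma ep_diag p r s : r != s -> ep p p r s = false.
Proof.
move=> h; apply/negbTE/negP => /orP[/andP[/eqP e1 /eqP e2]|/andP[/eqP e1 /eqP e2]];
  by rewrite -e1 -e2 eqxx in h.
Qed.

Variables (a b x u y w : 'I_n).

Definition cnd p q := [|| ep p q a b, ep p q x u, ep p q y w, ep p q a x, ep p q b y | ep p q u w].
Definition sw G : graph n := [ffun e => if cnd e.1 e.2 then ~~ G e else G e].

Lemma swK : involutive sw.
Proof. by move=> G; apply/ffunP => e; rewrite !ffunE; case: (cnd _ _) => //; rewrite negbK. Qed.

Lemma sw_inj : injective sw.
Proof. exact: (inv_inj swK). Qed.

Hypotheses (hab : a != b) (hax : a != x) (hau : a != u) (hay : a != y) (haw : a != w)
  (hbx : b != x) (hbu : b != u) (hby : b != y) (hbw : b != w) (hxu : x != u)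
  (hxy : x != y) (hxw : x != w) (huy : u != y) (huw : u != w) (hyw : y != w).

Lemma cnd_sym p q : cnd q p = cnd p q.
Proof. by rewrite /cnd !(ep_sym q p). Qed.

Lemma cnd_diag p : cnd p p = false.
Proof. by rewrite /cnd !ep_diag. Qed.

Lemma cnd_a z : cnd a z = (z == b) || (z == x).
Proof. rewrite /cnd /ep !eqxx; neqs; by rewrite /= ?orbF. Qed.
Lemma cnd_b z : cnd b z = (z == a) || (z == y).
Proof. rewrite /cnd /ep !eqxx; neqs; by rewrite /= ?orbF. Qed.
Lemma cnd_x z : cnd x z = (z == u) || (z == a).
Proof. rewrite /cnd /ep !eqxx; neqs; by rewrite /= ?orbF. Qed.
Lemma cnd_u z : cnd u z = (z == x) || (z == w).
Proof. rewrite /cnd /ep !eqxx; neqs; by rewrite /= ?orbF. Qed.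
Lemma cnd_y z : cnd y z = (z == w) || (z == b).
Proof. rewrite /cnd /ep !eqxx; neqs; by rewrite /= ?orbF. Qed.
Lemma cnd_w z : cnd w z = (z == y) || (z == u).
Proof. rewrite /cnd /ep !eqxx; neqs; by rewrite /= ?orbF. Qed.
Lemma cnd_o z0 z : z0 != a -> z0 != b -> z0 != x -> z0 != u -> z0 != y -> z0 != w ->
  cnd z0 z = false.
Proof. move=> *; rewrite /cnd /ep; neqs; by []. Qed.


Lemma row_gen G z0 z1 z2 : (forall z, cnd z0 z = (z == z1) || (z == z2)) ->
  G (z0, z1) -> ~~ G (z0, z2) -> forall z, sw G (z0, z) = G (z0, tsw z1 z2 z).
Proof.
move=> hc h1 h2 z; rewrite ffunE /= hc /tsw.
case: (eqVneq z z1) => [->|n1] /=; first by rewrite h1 (negbTE h2).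
case: (eqVneq z z2) => [->|n2] /=; by rewrite ?h1.
Qed.

Lemma card_row G G' z0 z1 z2 (P : pred 'I_n) :
  (forall z, G' (z0, z) = G (z0, tsw z1 z2 z)) -> P z1 = P z2 ->
  #|[set z | P z && G' (z0, z)]| = #|[set z | P z && G (z0, z)]|.
Proof.
move=> h hp; rewrite -[RHS](card_preimset _ (inv_inj (tswK z1 z2))).
by apply: eq_card => z; rewrite !inE h (tsw_pred _ hp).
Qed.

Variable G : graph n.
Hypotheses (Gsym : forall p q, G (p, q) = G (q, p)) (Gloop : forall p, G (p, p) = false).
Hypotheses (Eab : G (a, b)) (Exu : G (x, u)) (Eyw : G (y, w))
  (Nax : ~~ G (a, x)) (Nby : ~~ G (b, y)) (Nuw : ~~ G (u, w)).

Lemma sw_row z0 : exists z1 z2, (forall z, sw G (z0, z) = G (z0, tsw z1 z2 z)) /\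
  (forall P : pred 'I_n, P a = P b -> P a = P x -> P b = P y ->
     z0 \notin [set x; u; y; w] -> P z1 = P z2).
Proof.
have sy : forall p q, ~~ G (p, q) -> ~~ G (q, p) by move=> p q; rewrite Gsym.
case: (eqVneq z0 a) => [->|na].
  exists b, x; split; first by apply: row_gen => //; apply: cnd_a.
  by move=> P h1 h2 _ _; rewrite -h1 h2.
case: (eqVneq z0 b) => [->|nb].
  exists a, y; split; first by apply: row_gen => //; [apply: cnd_b|rewrite Gsym].
  by move=> P h1 _ h3 _; rewrite h1 h3.
have nin : forall P : pred 'I_n, z0 \in [set x; u; y; w] -> z0 \notin [set x; u; y; w] -> P z0 = P z0.
  by move=> P ->.
case: (eqVneq z0 x) => [->|nx].
  exists u, a; split; first by apply: row_gen => //; [apply: cnd_x|apply: sy].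
  by move=> P _ _ _; rewrite !inE eqxx.
case: (eqVneq z0 u) => [->|nu].
  exists x, w; split; first by apply: row_gen => //; [apply: cnd_u|rewrite Gsym].
  by move=> P _ _ _; rewrite !inE eqxx orbT.
case: (eqVneq z0 y) => [->|ny].
  exists w, b; split; first by apply: row_gen => //; [apply: cnd_y|apply: sy].
  by move=> P _ _ _; rewrite !inE eqxx !orbT.
case: (eqVneq z0 w) => [->|nw].
  exists y, u; split; first by apply: row_gen => //; [apply: cnd_w|rewrite Gsym|apply: sy].
  by move=> P _ _ _; rewrite !inE eqxx !orbT.
exists z0, z0; split => // z; rewrite ffunE /= cnd_o // /tsw.
by case: (eqVneq z z0) => [->|//].
Qed.

Lemma sw_simple : simpleb (sw G).
Proof.
apply/andP; split.
  by apply/forallP => p; rewrite ffunE /= cnd_diag Gloop.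
apply/forallP => p; apply/forallP => q; apply/eqP.
by rewrite !ffunE /= cnd_sym Gsym.
Qed.

Lemma sw_deg z0 : deg (sw G) z0 = deg G z0.
Proof.
have [z1 [z2 [h1 _]]] := sw_row z0.
transitivity #|[set z | predT z && sw G (z0, z)]|; first by apply: eq_card => z; rewrite !inE.
by rewrite (card_row (P := predT) h1) //; apply: eq_card => z; rewrite !inE.
Qed.

Lemma sw_degS (S : {set 'I_n}) z0 : a \in S -> b \in S -> x \in S -> y \in S ->
  z0 \notin [set x; u; y; w] -> degS S (sw G) z0 = degS S G z0.
Proof.
move=> aS bS xS yS hz.
have [z1 [z2 [h1 h2]]] := sw_row z0.
rewrite /degS (card_row (P := mem S) h1) //; apply: h2 => //=; by rewrite ?aS ?bS ?xS ?yS.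
Qed.

Lemma sw_edges : [/\ sw G (a, b) = false, sw G (a, x), sw G (b, y) & sw G (u, w)].
Proof.
rewrite !ffunE /= !cnd_a !cnd_b cnd_u !eqxx ?orbT /= Eab.
by rewrite Nax Nby Nuw.
Qed.

End Switch.

Section Count.
Local Open Scope nat_scope.
Variables (n : nat) (d : 'I_n -> nat) (S Fs : {set 'I_n}) (a b : 'I_n).
Implicit Types G : graph n.

Lemma graphsP G : G \in graphs d ->
  [/\ forall p q, G (p, q) = G (q, p), forall p, G (p, p) = false & forall v, deg G v = d v].
Proof.
rewrite inE => /andP[/andP[/forallP hl /forallP hs] /forallP hd]; split.
- by move=> p q; apply/eqP; move/forallP: (hs p) => /(_ q).
- by move=> p; apply/negbTE.
- by move=> v; apply/eqP.
Qed.

Lemma deg_le G v : G \in graphs d -> deg G v <= Defs.Delta d.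
Proof. by case/graphsP=> _ _ ->; apply: leq_bigmax. Qed.

Lemma card_E1 G (C : {set 'I_n}) :
  #|[set p | G p && (p.1 \in C)]| = \sum_(i in C) deg G i.
Proof.
rewrite -(card_dep (mem C) (fun i j => G (i, j))).
by apply: eq_card => -[i j]; rewrite !inE andbC.
Qed.

Lemma card_E2 G (C : {set 'I_n}) : G \in graphs d ->
  #|[set p | G p && (p.2 \in C)]| = #|[set p | G p && (p.1 \in C)]|.
Proof.
case/graphsP => hs _ _.
have inj : injective (@pswap 'I_n 'I_n) by apply: (can_inj (g := @pswap _ _)); case.
rewrite -(card_preimset _ inj); apply: eq_card => -[i j]; rewrite !inE /pswap /=.
by rewrite hs.
Qed.

Lemma bad1 G (C : {set 'I_n}) : G \in graphs d ->
  #|[set p | G p && (p.1 \in C)]| <= #|C| * Defs.Delta d.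
Proof.
move=> hG; rewrite card_E1 -sum_nat_const; apply: leq_sum => i _; exact: deg_le.
Qed.

Lemma bad2 G (C : {set 'I_n}) : G \in graphs d ->
  #|[set p | G p && (p.2 \in C)]| <= #|C| * Defs.Delta d.
Proof. by move=> hG; rewrite card_E2 //; apply: bad1. Qed.

Lemma card_Q1 G : G \in graphs d -> #|[set p | G p && (p.1 \in S)]| = dset d S.
Proof. by case/graphsP => _ _ hd; rewrite card_E1 /dset; apply: eq_bigr => i _. Qed.

Lemma card_E G : G \in graphs d -> #|[set p | G p]| = Mtot d.
Proof.
case/graphsP => _ _ hd.
have -> : #|[set p | G p]| = #|[set p | G p && (p.1 \in [set: 'I_n])]|.
  by apply: eq_card => p; rewrite !inE andbT.
rewrite card_E1 /Mtot; apply: eq_big => // i; by rewrite inE.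
Qed.

Lemma card_N G v : G \in graphs d -> #|[set z | G (v, z)]| = d v.
Proof. by case/graphsP => _ _ <-. Qed.

End Count.

From mathcomp Require Import zify.

Section Main.
Local Open Scope nat_scope.
Variables (n : nat) (d : 'I_n -> nat) (S Fs : {set 'I_n}) (a b : 'I_n).
Implicit Types G : graph n.

Definition F1 G := [set p : 'I_n * 'I_n |
  [&& G p, p.1 \in S, p.1 \notin Fs, p.2 \notin Fs & ~~ G (a, p.1)]].
Definition F2 G (p : 'I_n * 'I_n) := [set q : 'I_n * 'I_n |
  [&& G q, q.1 \in S, q.1 \notin Fs, q.2 \notin Fs, ~~ G (b, q.1),
      q.1 \notin [set p.1; p.2], q.2 \notin [set p.1; p.2] & ~~ G (p.2, q.2)]].
Definition Fwd G := [set t : ('I_n * 'I_n) * ('I_n * 'I_n) | (t.1 \in F1 G) && (t.2 \in F2 G t.1)].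
Definition Bk G := [set t : ('I_n * 'I_n) * ('I_n * 'I_n) |
  [&& G (a, t.1.1), G (b, t.2.1) & G (t.1.2, t.2.2)]].
Definition swt (t : ('I_n * 'I_n) * ('I_n * 'I_n)) G := sw a b t.1.1 t.1.2 t.2.1 t.2.2 G.
Definition Lm := 2 * #|Fs| * Defs.Delta d + 4 * Defs.Delta d + 2 * (Defs.Delta d * Defs.Delta d).

Lemma F1_card G : G \in graphs d -> dset d S - Lm <= #|F1 G|.
Proof.
move=> hG.
set Q := [set p | G p && (p.1 \in S)].
set B1 := [set p | G p && (p.1 \in Fs)].
set B2 := [set p | G p && (p.2 \in Fs)].
set B3 := [set p | G p && (p.1 \in [set z | G (a, z)])].
have sub : Q :\: (B1 :|: B2 :|: B3) \subset F1 G.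
  apply/subsetP => p; rewrite !inE.
  case: (G p) => //=; case: (p.1 \in S); case: (p.1 \in Fs); case: (p.2 \in Fs); by case: (G (a, p.1)).
apply: leq_trans (subset_leq_card sub); apply: leq_trans (leq_cardD _ _).
rewrite (card_Q1 S hG) leq_sub2l //.
apply: leq_trans (leq_cardU _ _) _; rewrite -/B1 -/B2 -/B3.
have h1 : #|B1| <= #|Fs| * Defs.Delta d := bad1 Fs hG.
have h2 : #|B2| <= #|Fs| * Defs.Delta d := bad2 Fs hG.
have h3 : #|B3| <= #|[set z | G (a, z)]| * Defs.Delta d := bad1 _ hG.
rewrite (card_N a hG) in h3.
have h4 : d a <= Defs.Delta d by apply: leq_bigmax.
have h5 := leq_cardU B1 B2.
have h6 : d a * Defs.Delta d <= Defs.Delta d * Defs.Delta d by apply: leq_mul.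
rewrite /Lm; lia.
Qed.


Lemma F2_card G p : G \in graphs d -> dset d S - Lm <= #|F2 G p|.
Proof.
move=> hG.
set Q := [set q | G q && (q.1 \in S)].
set B1 := [set q | G q && (q.1 \in Fs)].
set B2 := [set q | G q && (q.2 \in Fs)].
set B3 := [set q | G q && (q.1 \in [set z | G (b, z)])].
set B4 := [set q | G q && (q.1 \in [set p.1; p.2])].
set B5 := [set q | G q && (q.2 \in [set p.1; p.2])].
set B6 := [set q | G q && (q.2 \in [set z | G (p.2, z)])].
have sub : Q :\: (B1 :|: B2 :|: B3 :|: B4 :|: B5 :|: B6) \subset F2 G p.
  apply/subsetP => q; rewrite !inE.
  case: (G q) => //=; rewrite !negb_or.
  move=> /andP[/andP[/andP[/andP[/andP[/andP[h1 h2] h3] /andP[h4 h4']] /andP[h5 h5']] h6] hs].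
  by rewrite hs h1 h2 h3 h4 h4' h5 h5' h6.
apply: leq_trans (subset_leq_card sub); apply: leq_trans (leq_cardD _ _).
rewrite (card_Q1 S hG) leq_sub2l //.
have h1 : #|B1| <= #|Fs| * Defs.Delta d := bad1 Fs hG.
have h2 : #|B2| <= #|Fs| * Defs.Delta d := bad2 Fs hG.
have h3 : #|B3| <= #|[set z | G (b, z)]| * Defs.Delta d := bad1 _ hG.
have h4 : #|B4| <= #|[set p.1; p.2]| * Defs.Delta d := bad1 _ hG.
have h5 : #|B5| <= #|[set p.1; p.2]| * Defs.Delta d := bad2 _ hG.
have h6 : #|B6| <= #|[set z | G (p.2, z)]| * Defs.Delta d := bad2 _ hG.
rewrite (card_N b hG) in h3; rewrite (card_N p.2 hG) in h6.
have c2 : #|[set p.1; p.2]| <= 2 by rewrite cards2; case: (p.1 != p.2).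
have db : d b <= Defs.Delta d by apply: leq_bigmax.
have dp : d p.2 <= Defs.Delta d by apply: leq_bigmax.
have m1 : d b * Defs.Delta d <= Defs.Delta d * Defs.Delta d by apply: leq_mul.
have m2 : d p.2 * Defs.Delta d <= Defs.Delta d * Defs.Delta d by apply: leq_mul.
have m3 : #|[set p.1; p.2]| * Defs.Delta d <= 2 * Defs.Delta d by apply: leq_mul.
have u1 := leq_cardU B1 B2.
have u2 := leq_cardU (B1 :|: B2) B3.
have u3 := leq_cardU (B1 :|: B2 :|: B3) B4.
have u4 := leq_cardU (B1 :|: B2 :|: B3 :|: B4) B5.
have u5 := leq_cardU (B1 :|: B2 :|: B3 :|: B4 :|: B5) B6.
rewrite /Lm; lia.
Qed.

Lemma Fwd_card G : G \in graphs d -> (dset d S - Lm) * (dset d S - Lm) <= #|Fwd G|.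
Proof.
move=> hG.
have -> : #|Fwd G| = \sum_(p | p \in F1 G) #|F2 G p|.
  rewrite /Fwd (card_dep (fun p => p \in F1 G) (fun p q => q \in F2 G p)); apply: eq_bigr => p _; apply: eq_card => q; by rewrite inE.
apply: leq_trans (leq_mul (F1_card hG) (leqnn _)) _.
rewrite -sum_nat_const; apply: leq_sum => p _; exact: F2_card.
Qed.


Lemma in_notin_neq (T : finType) (A : {set T}) p q : p \in A -> q \notin A -> p != q.
Proof. by move=> hp; apply: contraNneq => <-. Qed.

Lemma edge_neq G p q : G \in graphs d -> G (p, q) -> p != q.
Proof. by case/graphsP => _ hl _; apply: contraTneq => ->; rewrite hl. Qed.

Definition fperm (t : ('I_n * 'I_n) * ('I_n * 'I_n)) := ((t.1.1, t.2.1), (t.1.2, t.2.2)).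

Lemma fpermK : involutive fperm.
Proof. by case=> [[? ?] [? ?]]. Qed.

Lemma Bk_card G : G \in graphs d -> #|Bk G| = d a * d b * Mtot d.
Proof.
move=> hG.
have -> : Bk G = fperm @^-1: setX (setX [set z | G (a, z)] [set z | G (b, z)]) [set p | G p].
  by apply/setP => -[[x u] [y w]]; rewrite !inE /= andbA.
rewrite card_preimset ?cardsX ?(card_N a hG) ?(card_N b hG) ?(card_E hG) //; exact: (inv_inj fpermK).
Qed.

Hypotheses (aF : a \in Fs) (bF : b \in Fs) (hab : a != b) (aS : a \in S) (bS : b \in S).
Variable B : {set graph n}.
Hypothesis HB : forall G G', G \in B -> (forall z, z \in Fs -> degS S G' z = degS S G z) -> G' \in B.

Lemma sw_good G t : G \in B -> G \in graphs d -> G (a, b) -> t \in Fwd G ->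
  [/\ swt t G \in B, swt t G \in graphs d, ~~ swt t G (a, b) & t \in Bk (swt t G)].
Proof.
move=> GB hG Eab; case/graphsP: (hG) => Gs Gl Gd.
case: t => [[x u] [y w]]; rewrite !inE /= !negb_or.
move=> /andP[/and5P[Exu xS xF uF Nax] /and5P[Eyw yS yF wF /and4P[Nby /andP[hyx hyu] /andP[hwx hwu] Nuw]]].
have hax := in_notin_neq aF xF; have hau := in_notin_neq aF uF.
have hay := in_notin_neq aF yF; have haw := in_notin_neq aF wF.
have hbx := in_notin_neq bF xF; have hbu := in_notin_neq bF uF.
have hby := in_notin_neq bF yF; have hbw := in_notin_neq bF wF.
have hxu := edge_neq hG Exu; have hyw := edge_neq hG Eyw.
have hxy : x != y by rewrite eq_sym.
have hxw : x != w by rewrite eq_sym.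
have huy : u != y by rewrite eq_sym.
have huw : u != w by rewrite eq_sym.
rewrite /swt /=.
have [E1 E2 E3 E4] : [/\ sw a b x u y w G (a, b) = false, sw a b x u y w G (a, x),
    sw a b x u y w G (b, y) & sw a b x u y w G (u, w)] by apply: sw_edges.
split.
- apply: (HB GB) => z zF; apply: sw_degS => //.
  by rewrite !inE (negbTE (in_notin_neq zF xF)) (negbTE (in_notin_neq zF uF))
    (negbTE (in_notin_neq zF yF)) (negbTE (in_notin_neq zF wF)).
- rewrite sw_simple //=; apply/forallP => v; rewrite sw_deg //; exact/eqP.
- by rewrite E1.
- by rewrite E2 E3 E4.
Qed.

Lemma dcount :
  #|[set G in B | (G \in graphs d) && G (a, b)]| * ((dset d S - Lm) * (dset d S - Lm)) <=
  #|[set G in B | (G \in graphs d) && ~~ G (a, b)]| * (d a * d b * Mtot d).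
Proof.
set X := [set G in B | (G \in graphs d) && G (a, b)].
set Y := [set G in B | (G \in graphs d) && ~~ G (a, b)].
have eX : \sum_(G | G \in X) #|[set t | t \in Fwd G]| =
          \sum_t #|[set G | (G \in X) && (t \in Fwd G)]|.
  by rewrite -(card_dep (mem X) (fun G t => t \in Fwd G))
             (card_dep2 (fun G t => (G \in X) && (t \in Fwd G))).
have eY : \sum_(G | G \in Y) #|[set t | t \in Bk G]| =
          \sum_t #|[set G | (G \in Y) && (t \in Bk G)]|.
  by rewrite -(card_dep (mem Y) (fun G t => t \in Bk G))
             (card_dep2 (fun G t => (G \in Y) && (t \in Bk G))).
apply: (@leq_trans (\sum_(G | G \in X) #|[set t | t \in Fwd G]|)).
  rewrite -sum_nat_const; apply: leq_sum => G; rewrite inE => /andP[_ /andP[hG _]].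
  by rewrite (eq_card (B := Fwd G)) ?Fwd_card // => t; rewrite inE.
apply: (@leq_trans (\sum_(G | G \in Y) #|[set t | t \in Bk G]|)); last first.
  rewrite -sum_nat_const; apply: leq_sum => G; rewrite inE => /andP[_ /andP[hG _]].
  by rewrite (eq_card (B := Bk G)) ?Bk_card // => t; rewrite inE.
rewrite eX eY; apply: leq_sum => t _.
rewrite -(card_imset _ (@sw_inj _ a b t.1.1 t.1.2 t.2.1 t.2.2)).
apply: subset_leq_card; apply/subsetP => G' /imsetP[G].
rewrite inE => /andP[]; rewrite inE => /andP[GB /andP[hG Eab]] ht ->.
have [h1 h2 h3 h4] := sw_good GB hG Eab ht.
by rewrite inE h4 andbT inE h1 h2 h3.
Qed.

End Main.

Lemma final_real (X Y D dS da db M : nat) (J : R) :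
  (X * D <= Y * (da * db * M))%N -> (dS * dS <= 4 * D)%N -> (0 < dS)%N -> (0 < X + Y)%N ->
  (INR da <= J)%R -> (INR db <= J)%R ->
  (INR X / INR (X + Y) <= 4 * J ^ 2 * INR M / (INR dS) ^ 2)%R.
Proof.
move=> h1 h2 h3 h4 hja hjb.
have hn : (X * (dS * dS) <= 4 * (Y * (da * db * M)))%N by nia.
have hr := le_INR _ _ (elimT leP hn).
rewrite !mult_INR in hr.
have s0 : (0 < INR (X + Y))%R by apply: lt_0_INR; apply/ltP.
have d0 : (0 < INR dS)%R by apply: lt_0_INR; apply/ltP.
have ys : (INR Y <= INR (X + Y))%R by apply: le_INR; apply/leP; rewrite leq_addl.
have pa := pos_INR da; have pb := pos_INR db; have pM := pos_INR M; have pY := pos_INR Y.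
have pX := pos_INR X.
have dd : (INR da * INR db <= J * J)%R by apply: Rmult_le_compat.
have k1 : (INR Y * (INR da * INR db * INR M) <= INR (X + Y) * (J * J * INR M))%R.
  have m1 : (INR da * INR db * INR M <= J * J * INR M)%R by apply: Rmult_le_compat_r.
  apply: Rmult_le_compat => //; apply: Rmult_le_pos => //; exact: Rmult_le_pos.
have key : (INR X * (INR dS * INR dS) <= 4 * (INR (X + Y) * (J * J * INR M)))%R.
  simpl in hr; lra.
set s := INR (X + Y) in s0 ys k1 key *.
set q := INR dS in d0 hr key *.
replace (INR X / s)%R with ((INR X * (q * q)) * / (s * (q * q)))%R by (field; lra).
replace (4 * J ^ 2 * INR M / q ^ 2)%R with ((4 * (s * (J * J * INR M))) * / (s * (q * q)))%R
  by (field; lra).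
apply: Rmult_le_compat_r => //.
left; apply: Rinv_0_lt_compat; apply: Rmult_lt_0_compat => //; exact: Rmult_lt_0_compat.
Qed.

Lemma big_dS (Dl dS cK : nat) (del z : R) : (0 < cK)%N -> (/2 <= z)%R ->
  ((INR Dl)^2 * z^12 <= del * INR dS)%R -> (del < / (4096 * INR cK))%R ->
  (cK * (Dl * Dl) <= dS)%N.
Proof.
move=> hc hz h hd.
have c0 : (0 < INR cK)%R by apply: lt_0_INR; apply/ltP.
have z12 : ((/2)^12 <= z^12)%R by apply: pow_incr; lra.
have e : ((/2)^12 = /4096)%R by simpl; field.
have p2 : (0 <= INR Dl ^ 2)%R by apply: pow_le; apply: pos_INR.
have h1 : (INR Dl ^ 2 * / 4096 <= del * INR dS)%R.
  rewrite -e; apply: Rle_trans h; exact: Rmult_le_compat_l.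
have h2 : (del * INR dS <= / (4096 * INR cK) * INR dS)%R.
  apply: Rmult_le_compat_r; [exact: pos_INR | lra].
have h3 : (INR Dl ^ 2 * / 4096 <= / (4096 * INR cK) * INR dS)%R by lra.
have h4 := Rmult_le_compat_l (4096 * INR cK) _ _ (ltac:(lra) : (0 <= 4096 * INR cK)%R) h3.
replace (4096 * INR cK * (INR Dl ^ 2 * / 4096))%R with (INR cK * (INR Dl * INR Dl))%R in h4
  by (simpl; field).
replace (4096 * INR cK * (/ (4096 * INR cK) * INR dS))%R with (INR dS) in h4
  by (field; lra).
apply/leP; apply: INR_le; by rewrite !mult_INR.
Qed.

Open Scope R_scope.

Theorem lemma3p5 (k : nat) (d : forall n, 'I_n -> nat) (S : forall n, {set 'I_n})
  (delta : nat -> R) (c : R) :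
  standing d S delta c ->
  exists K : R, exists N : nat, forall n : nat, (N <= n)%N ->
    forall v : 'I_k.+2 -> 'I_n, injective v ->
    (forall j, v j \in Ssmall (d n) (S n) (delta n)) ->
    let bound := K * (Jpar (d n) (S n) (delta n))^2 * INR (Mtot (d n))
                   / (INR (dset (d n) (S n)))^2 in
    (forall i : 'I_k.+2 -> nat,
       (forall j, (i j <= d n (v j))%N) ->
       let B := [set G : graph n | [forall j, degS (S n) G (v j) == i j]] in
       (0 < #|B :&: graphs (d n)|)%N ->
       cprob (d n) (edge_ev (v (inord 0)) (v (inord 1))) B <= bound) /\
    prob (d n) (edge_ev (v (inord 0)) (v (inord 1))) <= bound.
Proof.
move=> [c0 [dpos [dlim [_ [N1 hN1]]]]].
pose cK := (2 * (2 * k.+2 + 6))%N.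
have cK0 : (0 < cK)%N by rewrite /cK; lia.
have eps0 : 0 < / (4096 * INR cK).
  apply: Rinv_0_lt_compat; have := lt_0_INR cK (elimT ltP cK0); lra.
have [N2 hN2] := dlim _ eps0.
exists 4, (maxn N1 N2) => n hn v vinj vS.
have [_ [dge1 [hodd [hne [hst hgam]]]]] := hN1 n (leq_trans (leq_maxl _ _) hn).
have hdl := hN2 n (leq_trans (leq_maxr _ _) hn).
pose a := v (inord 0); pose b := v (inord 1).
pose Fs := [set v j | j : 'I_k.+2].
have vF : forall j, v j \in Fs by move=> j; apply: imset_f.
have cardF : (#|Fs| <= k.+2)%N.
  by apply: leq_trans (leq_imset_card _ _) _; rewrite cardT size_enum_ord.
have hab : a != b.
  rewrite /a /b (inj_eq vinj); apply/eqP => /(congr1 val); by rewrite /= !inordK.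
have vSm : forall j, v j \in S n /\ INR (d n (v j)) <= Cpar (d n) (S n) (delta n).
  move=> j; move: (vS j); rewrite inE => /andP[h1 h2]; split => //; move: h2; by case: Rle_dec.
have vD : forall j, (d n (v j) <= Defs.Delta (d n))%N by move=> j; apply: leq_bigmax.
have vJ : forall j, INR (d n (v j)) <= Jpar (d n) (S n) (delta n).
  move=> j; apply: Rmin_glb; [exact: (vSm j).2 | apply: le_INR; apply/leP; exact: vD].
have aS : a \in S n := (vSm _).1.
have bS : b \in S n := (vSm _).1.
have dSa : (d n a <= dset (d n) (S n))%N by rewrite /dset (bigD1 a) ?leq_addr.
have da1 := dge1 a.
have dSM : (dset (d n) (S n) <= Mtot (d n))%N.
  rewrite /Mtot /dset [X in (_ <= X)%N](bigID (mem (S n))) /=; exact: leq_addr.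
have M2 : (2 <= Mtot (d n))%N.
  move: hodd dSM; case: (Mtot (d n)) => [|[|m]] //; lia.
set dS := dset (d n) (S n) in dSa dSM hst hgam *.
set M := Mtot (d n) in dSM M2 hst hgam *.
set Dl := Defs.Delta (d n) in vD hst *.
have hz : / 2 <= / gam (d n) (S n) * ln (INR M).
  rewrite /gam -/dS -/M Rinv_div.
  have l2 : ln 2 <= ln (INR M).
    have h2 : 2 <= INR M by apply: (le_INR 2); apply/leP.
    case: (Rle_lt_or_eq_dec _ _ h2) => [hl|<-]; last exact: Rle_refl.
    by left; apply: ln_increasing => //; lra.
  have m1 : 1 <= INR M / INR dS.
    have p : 0 < INR dS by apply: lt_0_INR; apply/ltP; lia.
    apply: (Rmult_le_reg_r (INR dS)) => //; rewrite Rmult_1_l /Rdiv Rmult_assoc Rinv_l; last lra.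
    by rewrite Rmult_1_r; apply: le_INR; apply/leP.
  have := ln_lt_2 => l3.
  apply: (Rle_trans _ (1 * ln (INR M))); first lra.
  apply: Rmult_le_compat_r => //; lra.
have bigS := big_dS cK0 hz hst hdl.
have Dl1 : (1 <= Dl)%N by apply: leq_trans (vD (inord 0)).
have L2 : (2 * Lm (d n) Fs <= dS)%N.
  rewrite /Lm -/Dl; rewrite /cK in bigS.
  have : (#|Fs| * Dl <= k.+2 * (Dl * Dl))%N.
    apply: leq_mul => //; by rewrite leq_pmull.
  move=> h.
  have hD : (Dl <= Dl * Dl)%N by rewrite leq_pmulr.
  rewrite -!mulnA in bigS *.
  move: bigS h hD; set X := (Dl * Dl)%N; set F := (#|Fs| * Dl)%N.
  rewrite mulnDl -mulnA; set P := (k.+2 * X)%N.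
  lia.
have D4 : (dS * dS <= 4 * ((dS - Lm (d n) Fs) * (dS - Lm (d n) Fs)))%N .
  move: L2; set L := Lm (d n) Fs => L2.
  have eL : dS = (dS - L + L)%N by rewrite subnK //; lia.
  set e := (dS - L)%N in eL *.
  have le : (L <= e)%N by lia.
  have h1 : (L * L <= e * e)%N by apply: leq_mul.
  have h2 : (e * L <= e * e)%N by apply: leq_mul.
  rewrite eL; lia.
have core : forall B' : {set graph n},
    (forall G G', G \in B' -> (forall z, z \in Fs -> degS (S n) G' z = degS (S n) G z) -> G' \in B') ->
    (0 < #|B' :&: graphs (d n)|)%N ->
    INR #|edge_ev a b :&: B' :&: graphs (d n)| / INR #|B' :&: graphs (d n)| <=
    4 * Jpar (d n) (S n) (delta n) ^ 2 * INR M / INR dS ^ 2.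
  move=> B' HB hpos.
  have dc := @dcount n (d n) (S n) Fs a b (vF _) (vF _) hab aS bS B' HB.
  rewrite -/a -/b -/dS -/M in dc.
  have eX : #|edge_ev a b :&: B' :&: graphs (d n)| =
            #|[set G in B' | (G \in graphs (d n)) && G (a, b)]|.
    apply: eq_card => G; rewrite !inE.
    by case: (G (a, b)); case: (G \in B'); rewrite /= ?andbT ?andbF.
  have eY : #|(B' :&: graphs (d n)) :\: edge_ev a b| =
            #|[set G in B' | (G \in graphs (d n)) && ~~ G (a, b)]|.
    apply: eq_card => G; rewrite !inE.
    by case: (G (a, b)); case: (G \in B'); rewrite /= ?andbT ?andbF.
  have eT : #|B' :&: graphs (d n)| = (#|edge_ev a b :&: B' :&: graphs (d n)| +
              #|(B' :&: graphs (d n)) :\: edge_ev a b|)%N.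
    by rewrite -(cardsID (edge_ev a b) (B' :&: graphs (d n))) setIC setIA.
  rewrite eT eX eY; rewrite eT eX eY in hpos.
  apply: final_real dc D4 _ hpos (vJ _) (vJ _); lia.
move=> bound; split.
  move=> i hi B hpos; rewrite /cprob; apply: core => // G G'.
  rewrite !inE => /forallP h hdeg; apply/forallP => j; rewrite hdeg ?vF //; exact: h.
have := core setT (fun G G' _ _ => in_setT G'); rewrite !setTI ?setIT /prob.
move=> h; apply: h; by rewrite card_gt0.
Qed.
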